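(* Let $f:[0,\infty)\to[0,\infty)$ be continuously differentiable with $f>0$ on $[t_0,\infty)$ for some $t_0\ge0$ and $f\in C^2([t_0,\infty))$, let $g=\log f$ on $[t_0,\infty)$, and assume condition (H1) of the context with the pair $(q,p)$. Then for every $\varepsilon\in(0,q)$ there exists $t_\varepsilon\ge t_0$ such that $$\left(\frac{g(t)}{g(s)}\right)^{\frac1{q+\varepsilon}}\le\frac{g'(t)}{g'(s)}\le\left(\frac{g(t)}{g(s)}\right)^{\frac1{q-\varepsilon}}$$ for all $t>s\ge t_\varepsilon$.
   Context: Condition (H1): (i) $g'(t)>0$ and $g''(t)>0$ for all $t\ge t_0$, and there is a pair $(q,p)$ with either $q=1$ and $p\in(0,\infty]$, or $q\in(1,\infty)$ and $p\in(0,\infty)$, such that $\lim_{t\to\infty}\frac{g'(t)^2}{g(t)g''(t)}=q$ and $\lim_{t\to\infty}\frac{tg'(t)}{g(t)}=p$; (ii) if $q=1$, then $tg'(t)/g(t)$ is nondecreasing on $[t_0,\infty)$ and there exist $k\in\mathbb{N}$ and $\hat g\in C^2([t_0,\infty))$ with $f=\exp_k\circ\hat g$ and $\hat g'/\hat g$ nonincreasing on $[t_0,\infty)$ ($\exp_1=\exp$, $\exp_k=\exp_{k-1}\circ\exp$). *)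

(* Defs.v *)
From Stdlib Require Import Reals.
From Coquelicot Require Import Coquelicot.
Open Scope R_scope.

Definition cont_on_from (a : R) (h : R -> R) : Prop :=
  forall x, a <= x ->
    filterlim h (within (fun y => a <= y) (locally x)) (locally (h x)).

Definition deriv_on_from (a : R) (F F' : R -> R) : Prop :=
  forall x, a <= x ->
    filterlim (fun y => (F y - F x) / (y - x))
      (within (fun y => a <= y /\ y <> x) (locally x)) (locally (F' x)).

Definition exp_k (k : nat) (x : R) : R := Nat.iter k exp x.

(* Main.v *)
Require Import Defs.
From Stdlib Require Import Reals Lra.
From Coquelicot Require Import Coquelicot.
Open Scope R_scope.

Lemma dof_pt a F F' x : deriv_on_from a F F' -> a < x -> derivable_pt_lim F x (F' x).
Proof.
  intros H Hx eps Heps.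
  specialize (H x (Rlt_le _ _ Hx) (fun z => Rabs (z - F' x) < eps)).
  destruct H as [d Hd].
  { exists (mkposreal eps Heps). intros z Hz. exact Hz. }
  assert (Hp : 0 < Rmin d (x - a)) by (apply Rmin_pos; [apply cond_pos | lra]).
  exists (mkposreal _ Hp). intros h Hh0 Hh. simpl in Hh.
  assert (E : x + h - x = h) by ring.
  specialize (Hd (x + h)). rewrite E in Hd. apply Hd.
  - unfold ball; simpl. unfold AbsRing_ball, abs, minus, plus, opp; simpl.
    replace (x + h + - x) with h by ring.
    eapply Rlt_le_trans; [exact Hh| apply Rmin_l].
  - split.
    + assert (Rabs h < x - a) by (eapply Rlt_le_trans; [exact Hh | apply Rmin_r]).
      apply Rabs_def2 in H. lra.
    + intro C. apply Hh0. lra.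
Qed.
Lemma phi_deriv (G g1 g2 : R -> R) a c x :
  deriv_on_from a G g1 -> deriv_on_from a g1 g2 -> a < x -> 0 < G x -> 0 < g1 x ->
  derivable_pt_lim (fun t => ln (G t) - c * ln (g1 t)) x
    (/ G x * g1 x - c * (/ g1 x * g2 x)).
Proof.
  intros HG Hg Hx HGx Hgx.
  exact (derivable_pt_lim_minus (comp ln G) (mult_real_fct c (comp ln g1)) x _ _
    (derivable_pt_lim_comp G ln x _ _ (dof_pt _ _ _ _ HG Hx) (derivable_pt_lim_ln _ HGx))
    (derivable_pt_lim_scal _ c x _
      (derivable_pt_lim_comp g1 ln x _ _ (dof_pt _ _ _ _ Hg Hx) (derivable_pt_lim_ln _ Hgx)))).
Qed.
Lemma exp_le' x y : x <= y -> exp x <= exp y.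
Proof. intros [H|H]. left; apply exp_increasing; exact H. subst; lra. Qed.

Theorem lemma2p7
  (f f1 f2 : R -> R) (t0 : R) (g1 g2 : R -> R) (q : R) (p : Rbar)
  (Ht0 : 0 <= t0)
  (* f : [0,oo) -> [0,oo), continuously differentiable on [0,oo) *)
  (Hfnn : forall t, 0 <= t -> 0 <= f t)
  (Hf1 : deriv_on_from 0 f f1) (Hf1c : cont_on_from 0 f1)
  (* f > 0 on [t0,oo) and f in C^2([t0,oo)) *)
  (Hfpos : forall t, t0 <= t -> 0 < f t)
  (Hf2 : deriv_on_from t0 f1 f2) (Hf2c : cont_on_from t0 f2)
  (* g = log f on [t0,oo), with g' = g1 and g'' = g2 there *)
  (Hg1 : deriv_on_from t0 (fun t => ln (f t)) g1)
  (Hg2 : deriv_on_from t0 g1 g2)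
  (* (H1)(i) *)
  (Hg1pos : forall t, t0 <= t -> 0 < g1 t)
  (Hg2pos : forall t, t0 <= t -> 0 < g2 t)
  (Hqp : (q = 1 /\ Rbar_lt (Finite 0) p) \/
         (1 < q /\ Rbar_lt (Finite 0) p /\ Rbar_lt p p_infty))
  (Hlimq : is_lim (fun t => (g1 t) ^ 2 / (ln (f t) * g2 t)) p_infty (Finite q))
  (Hlimp : is_lim (fun t => t * g1 t / ln (f t)) p_infty p)
  (* (H1)(ii) *)
  (Hii : q = 1 ->
     (forall s t, t0 <= s -> s <= t ->
        s * g1 s / ln (f s) <= t * g1 t / ln (f t)) /\
     exists (k : nat) (gh gh1 gh2 : R -> R),
       (1 <= k)%nat /\
       deriv_on_from t0 gh gh1 /\ deriv_on_from t0 gh1 gh2 /\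
       cont_on_from t0 gh2 /\
       (forall t, t0 <= t -> f t = exp_k k (gh t)) /\
       (forall s t, t0 <= s -> s <= t -> gh1 t / gh t <= gh1 s / gh s)) :
  forall eps, 0 < eps < q ->
    exists te, t0 <= te /\
      forall s t, te <= s -> s < t ->
        Rpower (ln (f t) / ln (f s)) (1 / (q + eps)) <= g1 t / g1 s /\
        g1 t / g1 s <= Rpower (ln (f t) / ln (f s)) (1 / (q - eps)).
Proof.
  intros eps [He1 He2].
  destruct (Hlimq (fun z => Rabs (z - q) < eps)) as [M HM].
  { exists (mkposreal eps He1). intros z Hz. exact Hz. }
  set (G := fun t => ln (f t)) in *.
  set (te := Rmax t0 M + 1).
  assert (Hte0 : t0 < te) by (unfold te; generalize (Rmax_l t0 M); lra).
  assert (HteM : M < te) by (unfold te; generalize (Rmax_r t0 M); lra).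
  assert (Hpt : forall x, te <= x ->
     0 < G x /\ 0 < g1 x /\ 0 < g2 x /\
     Rabs (g1 x ^ 2 / (G x * g2 x) - q) < eps).
  { intros x Hx.
    assert (H1 := Hg1pos x ltac:(lra)). assert (H2 := Hg2pos x ltac:(lra)).
    assert (Hr := HM x ltac:(lra)). simpl in Hr. change (ln (f x)) with (G x) in Hr.
    split; [|split; [exact H1|split; [exact H2|exact Hr]]].
    apply Rabs_def2 in Hr. destruct Hr as [Hr1 Hr2].
    assert (Hr : 0 < g1 x ^ 2 / (G x * g2 x)) by lra.
    destruct (Rtotal_order (G x * g2 x) 0) as [Hn|[Hz|Hp]].
    - exfalso. assert (g1 x ^ 2 / (G x * g2 x) < 0).
      { unfold Rdiv. apply Rmult_pos_neg. apply pow_lt; lra. apply Rinv_lt_0_compat; lra. }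
      lra.
    - rewrite Hz in Hr. unfold Rdiv in Hr. rewrite Rinv_0, Rmult_0_r in Hr. lra.
    - destruct (Rtotal_order (G x) 0) as [Hn|[Hz|Hp']]; [| |exact Hp'].
      + exfalso. assert (G x * g2 x < 0) by (apply Rmult_neg_pos; lra). lra.
      + rewrite Hz in Hp. lra. }
  (* monotonicity via MVT *)
  assert (Hmono : forall c s t, te <= s -> s < t ->
     exists x, te <= x /\
       (ln (G t) - c * ln (g1 t)) - (ln (G s) - c * ln (g1 s)) =
       (g2 x / g1 x) * (g1 x ^ 2 / (G x * g2 x) - c) * (t - s)).
  { intros c s t Hs Hst.
    destruct (MVT_cor2 (fun t => ln (G t) - c * ln (g1 t))
       (fun x => / G x * g1 x - c * (/ g1 x * g2 x)) s t Hst) as [x [Ex Hx]].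
    { intros x Hx. destruct (Hpt x ltac:(lra)) as [A [B _]].
      apply phi_deriv with t0; auto; lra. }
    exists x. split; [lra|]. rewrite Ex.
    destruct (Hpt x ltac:(lra)) as [A [B [C _]]].
    f_equal. field. lra. }
  exists te. split; [lra|]. intros s t Hs Hst.
  destruct (Hpt s ltac:(lra)) as [Gs [g1s _]].
  destruct (Hpt t ltac:(lra)) as [Gt [g1t _]].
  destruct (Hmono (q + eps) s t Hs Hst) as [x [Hx Ex]].
  destruct (Hmono (q - eps) s t Hs Hst) as [y [Hy Ey]].
  destruct (Hpt x Hx) as [_ [g1x [g2x Rx]]].
  destruct (Hpt y Hy) as [_ [g1y [g2y Ry]]].
  apply Rabs_def2 in Rx. apply Rabs_def2 in Ry.
  assert (Px : 0 < g2 x / g1 x) by (apply Rdiv_lt_0_compat; lra).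
  assert (Py : 0 < g2 y / g1 y) by (apply Rdiv_lt_0_compat; lra).
  assert (Ix : (ln (G t) - (q + eps) * ln (g1 t)) - (ln (G s) - (q + eps) * ln (g1 s)) <= 0).
  { rewrite Ex. assert (0 <= (g2 x / g1 x) * ((q + eps) - g1 x ^ 2 / (G x * g2 x)) * (t - s)).
    { apply Rmult_le_pos; [apply Rmult_le_pos|]; lra. }
    nra. }
  assert (Iy : 0 <= (ln (G t) - (q - eps) * ln (g1 t)) - (ln (G s) - (q - eps) * ln (g1 s))).
  { rewrite Ey. apply Rmult_le_pos; [apply Rmult_le_pos|]; lra. }
  assert (Eg : g1 t / g1 s = exp (ln (g1 t) - ln (g1 s))).
  { rewrite <- ln_div by lra. rewrite exp_ln; [reflexivity|]. apply Rdiv_lt_0_compat; lra. }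
  assert (HGd : 0 < G t / G s) by (apply Rdiv_lt_0_compat; lra).
  change (ln (f t)) with (G t); change (ln (f s)) with (G s). unfold Rpower. rewrite Eg, ln_div by lra.
  split; apply exp_le'.
  - apply Rmult_le_reg_l with (q + eps); [lra|].
    field_simplify; [|lra]. lra.
  - apply Rmult_le_reg_l with (q - eps); [lra|].
    field_simplify; [|lra]. lra.
Qed.
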